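(* Let the map $w:V(\mathcal{H}\mathcal{L}_0)\mapsto\hat{\mathbb C}$ define a hexagonal circle pattern with $MR=-1$. Extend $w$ to the points of $V(\mathcal{T}\mathcal{L})\setminus V(\mathcal{H}\mathcal{L}_0)$ by the following rule. Fix some point $P_{\infty}\in\hat{\mathbb C}$. Let $\mathfrak{z}'$ be a center of an elementary hexagon of $\mathcal{H}\mathcal{L}_0$. Set $w(\mathfrak{z}')$ to be the reflection of the point $P_{\infty}$ in the circle $C(\mathfrak{z}')$. Then the condition $M(w_1,\dots,w_6)=-1$ holds also for $w_k=w(\mathfrak{z}_k)$ in the case when the points $\mathfrak{z}_1,\mathfrak{z}_2,\ldots,\mathfrak{z}_6$ are the vertices (listed counterclockwise) of any elementary hexagon of the two complementary hexagonal sublattices $\mathcal{H}\mathcal{L}_1$ and $\mathcal{H}\mathcal{L}_2$.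
   Context: Let $\omega=\exp(2\pi i/3)$, $\varepsilon=\exp(\pi i/3)$. The regular triangular lattice $\mathcal{T}\mathcal{L}$ has vertices $V(\mathcal{T}\mathcal{L})=\{k+\ell\omega+m\omega^2: k,\ell,m\in\mathbb Z\}$, edges joining vertices at distance 1. For $j=0,1,2$ the hexagonal sublattice $\mathcal{H}\mathcal{L}_j$ has vertices $k+\ell\omega+m\omega^2$ with $k+\ell+m\not\equiv j\pmod 3$, edges of length 1 between them, and 2-cells the regular hexagons with vertices $\mathfrak{z}'+\varepsilon^k$, $k=1,\dots,6$, centered at the points $\mathfrak{z}'$ with $k+\ell+m\equiv j\pmod 3$. The multi-ratio is $M(w_1,\dots,w_6)=\frac{(w_1-w_2)(w_3-w_4)(w_5-w_6)}{(w_2-w_3)(w_4-w_5)(w_6-w_1)}$. A map $w:V(\mathcal{H}\mathcal{L}_0)\to\hat{\mathbb C}$ defines a hexagonal circle pattern with $MR=-1$ if for every elementary hexagon of $\mathcal{H}\mathcal{L}_0$ with center $\mathfrak{z}'$ the points $w(\mathfrak{z}'+\varepsilon^k)$, $k=1,\dots,6$, lie in this circular order on a circle $C(\mathfrak{z}')$, and their multi-ratio (vertices listed counterclockwise) equals $-1$. *)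

(* Defs.v *)
From mathcomp Require Import all_boot all_algebra complex.
From mathcomp Require Import reals.
Set Implicit Arguments. Unset Strict Implicit. Unset Printing Implicit Defensive.
Import GRing.Theory Num.Theory.
Local Open Scope ring_scope.

(* A vertex k + l w + m w^2 of TL (w = exp(2 pi i/3)) is encoded by the pair
   (a, b) = (k - m, l - m) : it is the point a + b w  (since 1 + w + w^2 = 0).
   Its class k + l + m mod 3 equals (a + b) mod 3. *)
Definition pt := (int * int)%type.
Definition padd (z u : pt) : pt := (z.1 + u.1, z.2 + u.2).
Definition cls (z : pt) : int := ((z.1 + z.2) %% 3)%Z.

(* eps = exp(i pi/3) = 1 + w.  Offsets eps^k, k = 1..6, in (a,b)-coordinates:
   eps = 1 + w, eps^2 = w, eps^3 = -1, eps^4 = -1 - w, eps^5 = -w, eps^6 = 1.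
   (Listed counterclockwise.) *)
Definition eps_off (k : nat) : pt :=
  match k with
  | 1 => (1, 1)%Z
  | 2 => (0, 1)%Z
  | 3 => (-1, 0)%Z
  | 4 => (-1, -1)%Z
  | 5 => (0, -1)%Z
  | _ => (1, 0)%Z
  end.

Definition hexv (z : pt) (k : nat) : pt := padd z (eps_off k).

Section Sphere.
Variable R : realType.
Local Notation C := (R[i]).

(* None is the point at infinity. *)
Definition Chat := option C.

(* Homogeneous "difference": with homogeneous coordinates z ~ (z:1),
   oo ~ (1:0), this is the determinant x1*y2 - x2*y1.  For finite points it
   is z1 - z2; factors involving oo are the usual limits. *)
Definition hdet (u v : Chat) : C :=
  match u, v with
  | Some a, Some b => a - b
  | None, Some _ => 1
  | Some _, None => -1
  | None, None => 0
  end.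

(* Multi-ratio condition  M(w1,...,w6) = -1, written in cross-multiplied
   (homogeneous) form:
     (w1-w2)(w3-w4)(w5-w6) = - (w2-w3)(w4-w5)(w6-w1). *)
Definition MR_minus1 (p : nat -> Chat) : Prop :=
  hdet (p 1%N) (p 2%N) * hdet (p 3%N) (p 4%N) * hdet (p 5%N) (p 6%N)
  + hdet (p 2%N) (p 3%N) * hdet (p 4%N) (p 5%N) * hdet (p 6%N) (p 1%N) = 0.

(* GCircle c r : the circle |z - c| = r ;  GLine p d : the line p + t d
   (t real) together with oo. *)
Inductive gcircle :=
  | GCircle of C & R
  | GLine of C & C.

Definition gcircle_wf (K : gcircle) : Prop :=
  match K with
  | GCircle _ r => 0 < r
  | GLine _ d => d != 0
  end.

Definition on_gcircle (K : gcircle) (u : Chat) : Prop :=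
  match K, u with
  | GCircle c r, Some z => `|z - c| = real_complex R r
  | GCircle _ _, None => False
  | GLine p d, Some z => (z - p) / d \is Num.real
  | GLine _ _, None => True
  end.

Definition reflect_gc (K : gcircle) (u : Chat) : Chat :=
  match K, u with
  | GCircle c r, Some z =>
      if z == c then None else Some (c + real_complex R (r ^+ 2) / (z - c)^*)
  | GCircle c _, None => Some c
  | GLine p d, Some z => Some (p + d / d^* * (z - p)^*)
  | GLine _ _, None => None
  end.

(* Six points p 1, ..., p 6 lie in this circular order on a circle:
   for all 1 <= i < j < k < l <= 6 the pair (p i, p k) separates (p j, p l),
   i.e. the cross-ratio (p_i-p_j)(p_k-p_l)/((p_j-p_k)(p_l-p_i)) is a negative
   real number.  (For a complex number x, "x < 0" means x is real and
   negative; we multiply by the conjugate of the denominator.) *)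
Definition circ_order6 (p : nat -> Chat) : Prop :=
  forall i j k l : nat, (1 <= i)%N -> (i < j)%N -> (j < k)%N -> (k < l)%N ->
    (l <= 6)%N ->
    hdet (p i) (p j) * hdet (p k) (p l) * (hdet (p j) (p k) * hdet (p l) (p i))^* < 0.

(* w : V(HL_0) -> Chat (values at points of class 0 are irrelevant) defines
   a hexagonal circle pattern with MR = -1, with circles C z'. *)
Definition hex_circle_pattern_MR (w : pt -> Chat) (Cc : pt -> gcircle) : Prop :=
  forall z : pt, cls z = 0%Z ->
    [/\ gcircle_wf (Cc z),
        (forall k : nat, (1 <= k <= 6)%N -> on_gcircle (Cc z) (w (hexv z k))),
        (forall k l : nat, (1 <= k)%N -> (k < l)%N -> (l <= 6)%N ->
            w (hexv z k) <> w (hexv z l)),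
        circ_order6 (fun k => w (hexv z k))
      & MR_minus1 (fun k => w (hexv z k))].

Definition extend_w (w : pt -> Chat) (Cc : pt -> gcircle) (Pinf : Chat)
  (z : pt) : Chat :=
  if cls z == 0%Z then reflect_gc (Cc z) Pinf else w z.

End Sphere.

(* Main.v *)
Require Import Defs.
From mathcomp Require Import all_boot all_algebra complex.
From mathcomp Require Import reals.
From mathcomp Require Import ring zify.
Import GRing.Theory Num.Theory.
Local Open Scope ring_scope.

Section Proof.
Variable R : realType.
Local Notation C := (R[i]).

Definition hom (u : Chat R) : C * C :=
  match u with Some a => (a, 1) | None => (1, 0) end.
Definition det2 (u v : C * C) : C := u.1 * v.2 - u.2 * v.1.
Definition cj (v : C * C) : C * C := (v.1^*, v.2^*).

Definition Mk (K : gcircle R) (v : C * C) : C * C :=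
  match K with
  | GCircle c r => (c * v.1 - (c * c^* - (real_complex R r) ^+ 2) * v.2,
                    v.1 - c^* * v.2)
  | GLine p d => (d * v.1 + (p * d^* - p^* * d) * v.2, d^* * v.2)
  end.

Definition DK (K : gcircle R) : C :=
  match K with
  | GCircle c r => - (real_complex R r) ^+ 2
  | GLine p d => d * d^*
  end.

Lemma hdetE u v : hdet u v = det2 (hom u) (hom v).
Proof. by case: u => [a|]; case: v => [b|]; rewrite /det2 /=; ring. Qed.

Lemma det2_cj u v : det2 (cj u) (cj v) = (det2 u v)^*.
Proof. by rewrite /det2 /= rmorphB !rmorphM. Qed.

Lemma det_M K u v : det2 (Mk K u) (Mk K v) = DK K * det2 u v.
Proof. by case: K => [c r|p d]; rewrite /det2 /=; ring. Qed.

Lemma rc_neq0 (r : R) : 0 < r -> real_complex R r != 0.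
Proof. move=> h. by rewrite (inj_eq (@complexI R)) lt0r_neq0. Qed.

Lemma DK_neq0 K : gcircle_wf K -> DK K != 0.
Proof.
case: K => [c r|p d] /= h.
  by rewrite oppr_eq0 expf_neq0 // (@rc_neq0 r h).
by rewrite mulf_neq0 // conjC_eq0.
Qed.

Lemma refl_hom K u : gcircle_wf K -> exists2 mu : C, mu != 0 &
  hom (reflect_gc K u) = (mu * (Mk K (cj (hom u))).1, mu * (Mk K (cj (hom u))).2).
Proof.
case: K => [c r|p d] /= h; case: u => [z|] /=.
- have hr := @rc_neq0 r h.
  case: eqP => [->|/eqP hz] /=.
    exists ((real_complex R r ^+ 2)^-1); first by rewrite invr_eq0 expf_neq0 //.
    congr pair; field. all: try done.
  have hz' : z^* - c^* != 0 by rewrite -rmorphB conjC_eq0 subr_eq0.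
  exists ((z^* - c^*)^-1); first by rewrite invr_eq0.
  rewrite rmorphXn rmorphB rmorph1 /=; congr pair; field; done.
- exists 1; first exact: oner_neq0.
  rewrite !rmorph1 !rmorph0; congr pair; ring.
- have hd : d^* != 0 by rewrite conjC_eq0.
  exists ((d^*)^-1); first by rewrite invr_eq0.
  rewrite rmorph1 rmorphB; congr pair; field; done.
- exists (d^-1); first by rewrite invr_eq0.
  rewrite rmorph1 rmorph0; congr pair; field; done.
Qed.


Lemma on_hom K x : gcircle_wf K -> on_gcircle K x -> exists2 l : C, l != 0 &
  Mk K (cj (hom x)) = (l * (hom x).1, l * (hom x).2).
Proof.
case: K => [c r|p d] /= h; case: x => [z|] //= H.
- have hr := @rc_neq0 r h.
  have Hn : (z - c) * (z^* - c^*) = real_complex R r ^+ 2 by rewrite -rmorphB -normCK H.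
  exists (z^* - c^*).
    rewrite -rmorphB conjC_eq0; apply/eqP => e.
    by move: hr; rewrite -H e normr0 eqxx.
  rewrite rmorph1 -Hn; congr pair; ring.
- have E : ((z - p) / d)^* = (z - p) / d by apply/eqP; rewrite -CrealE.
  rewrite fmorph_div rmorphB in E.
  have hd : d^* != 0 by rewrite conjC_eq0.
  have Hd : d * (z^* - p^*) = d^* * (z - p).
    transitivity (((z^* - p^*) / d^*) * (d * d^*)); first by field.
    rewrite E; field; done.
  exists (d^*) => //.
  rewrite rmorph1; congr pair.
  transitivity (d * (z^* - p^*) + p * d^*); first ring.
  rewrite Hd; ring.
- exists d => //.
  rewrite rmorph1 rmorph0; congr pair; ring.
Qed.

Lemma E_lem K (p q w : C * C) (mu l : C) :
  q = (mu * (Mk K (cj p)).1, mu * (Mk K (cj p)).2) ->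
  Mk K (cj w) = (l * w.1, l * w.2) ->
  det2 q w * l = mu * DK K * (det2 p w)^*.
Proof.
move=> -> Hw; have := det_M K (cj p) (cj w).
rewrite Hw det2_cj -mulrA => <-; rewrite /det2 /=; ring.
Qed.

Lemma F_lem K (u v : C * C) (lu lv : C) :
  Mk K (cj u) = (lu * u.1, lu * u.2) ->
  Mk K (cj v) = (lv * v.1, lv * v.2) ->
  det2 u v * lu * lv = DK K * (det2 u v)^*.
Proof.
move=> Hu Hv; have := det_M K (cj u) (cj v).
rewrite Hu Hv det2_cj => <-; rewrite /det2 /=; ring.
Qed.

End Proof.
Arguments hom {R}. Arguments det2 {R}. Arguments cj {R}. Arguments Mk {R}. Arguments DK {R}.
Arguments refl_hom {R K} u. Arguments on_hom {R K x}. Arguments E_lem {R K p q w mu l}. Arguments F_lem {R K u v lu lv}. Arguments hdetE {R}.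

Lemma alg (F : fieldType) (t12 t34 t56 t32 t54 t16 l12 l34 l56 l32 l54 l16
   l1a l3a l5a m1 m3 m5 D1 D3 D5 c2 c4 c6 e2 e4 e6 f2 f4 f6 : F) :
  l12 != 0 -> l34 != 0 -> l56 != 0 -> l32 != 0 -> l54 != 0 -> l16 != 0 ->
  l1a != 0 -> l3a != 0 -> l5a != 0 -> e2 != 0 -> e4 != 0 -> e6 != 0 ->
  t12 * l12 = m1 * D1 * c2 -> t34 * l34 = m3 * D3 * c4 ->
  t56 * l56 = m5 * D5 * c6 -> t32 * l32 = m3 * D3 * c2 ->
  t54 * l54 = m5 * D5 * c4 -> t16 * l16 = m1 * D1 * c6 ->
  e2 * l12 * l1a = D1 * f2 -> e2 * l32 * l3a = D3 * f2 ->
  e4 * l34 * l3a = D3 * f4 -> e4 * l54 * l5a = D5 * f4 ->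
  e6 * l56 * l5a = D5 * f6 -> e6 * l16 * l1a = D1 * f6 ->
  t12 * t34 * t56 - t32 * t54 * t16 = 0.
Proof.
move=> n12 n34 n56 n32 n54 n16 n1a n3a n5a ne2 ne4 ne6
  h12 h34 h56 h32 h54 h16 g12 g32 g34 g54 g56 g16.
have H2 : (l32 * l54 * l16 - l12 * l34 * l56) * (e2 * e4 * e6 * l1a * l3a * l5a) = 0.
  transitivity ((e2 * l32 * l3a) * (e4 * l54 * l5a) * (e6 * l16 * l1a)
     - (e2 * l12 * l1a) * (e4 * l34 * l3a) * (e6 * l56 * l5a)); first ring.
  rewrite g12 g32 g34 g54 g56 g16; ring.
have H3 : l32 * l54 * l16 - l12 * l34 * l56 = 0.
  have nz : e2 * e4 * e6 * l1a * l3a * l5a != 0 by rewrite !mulf_neq0.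
  by move/eqP: H2; rewrite mulf_eq0 (negPf nz) orbF => /eqP.
have H1 : (t12 * t34 * t56 - t32 * t54 * t16) * (l12 * l34 * l56 * l32 * l54 * l16)
   = m1 * m3 * m5 * D1 * D3 * D5 * c2 * c4 * c6 * (l32 * l54 * l16 - l12 * l34 * l56).
  transitivity ((t12 * l12) * (t34 * l34) * (t56 * l56) * (l32 * l54 * l16)
     - (t32 * l32) * (t54 * l54) * (t16 * l16) * (l12 * l34 * l56)); first ring.
  rewrite h12 h34 h56 h32 h54 h16; ring.
rewrite H3 mulr0 in H1.
have nz : l12 * l34 * l56 * l32 * l54 * l16 != 0 by rewrite !mulf_neq0.
by move/eqP: H1; rewrite mulf_eq0 (negPf nz) orbF => /eqP.
Qed.

Lemma hdet_neq0 (R : realType) (u v : Chat R) : u <> v -> det2 (hom u) (hom v) != 0.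
Proof.
case: u => [a|]; case: v => [b|] //= H; rewrite /det2 /=.
- rewrite mulr1 mul1r subr_eq0; apply/eqP => e; apply: H; by rewrite e.
- by rewrite mulr0 mul1r sub0r oppr_eq0 oner_neq0.
- by rewrite mulr1 mul0r subr0 oner_neq0.
Qed.

Lemma core (R : realType) (K1 K3 K5 : gcircle R) (P a x2 x4 x6 : Chat R) :
  gcircle_wf K1 -> gcircle_wf K3 -> gcircle_wf K5 ->
  on_gcircle K1 a -> on_gcircle K3 a -> on_gcircle K5 a ->
  on_gcircle K1 x2 -> on_gcircle K3 x2 -> on_gcircle K3 x4 ->
  on_gcircle K5 x4 -> on_gcircle K5 x6 -> on_gcircle K1 x6 ->
  x2 <> a -> x4 <> a -> x6 <> a ->
  hdet (reflect_gc K1 P) x2 * hdet (reflect_gc K3 P) x4 * hdet (reflect_gc K5 P) x6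
  + hdet x2 (reflect_gc K3 P) * hdet x4 (reflect_gc K5 P) * hdet x6 (reflect_gc K1 P)
  = 0.
Proof.
move=> w1 w3 w5 o1a o3a o5a o12 o32 o34 o54 o56 o16 d2 d4 d6.
have [m1 nm1 Q1] := refl_hom P w1.
have [m3 nm3 Q3] := refl_hom P w3.
have [m5 nm5 Q5] := refl_hom P w5.
have [l12 n12 L12] := on_hom w1 o12.
have [l16 n16 L16] := on_hom w1 o16.
have [l1a n1a L1a] := on_hom w1 o1a.
have [l32 n32 L32] := on_hom w3 o32.
have [l34 n34 L34] := on_hom w3 o34.
have [l3a n3a L3a] := on_hom w3 o3a.
have [l54 n54 L54] := on_hom w5 o54.
have [l56 n56 L56] := on_hom w5 o56.
have [l5a n5a L5a] := on_hom w5 o5a.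
rewrite !hdetE.
set q1 := hom (reflect_gc K1 P); set q3 := hom (reflect_gc K3 P);
  set q5 := hom (reflect_gc K5 P).
transitivity (det2 q1 (hom x2) * det2 q3 (hom x4) * det2 q5 (hom x6)
  - det2 q3 (hom x2) * det2 q5 (hom x4) * det2 q1 (hom x6)).
  rewrite /det2; ring.
have HH := (@alg _ _ _ _ _ _ _ _ _ _ _ _ _ _ _ _ _ _ _ _ _ _ _ _ _ _ _ _ _ _ _ n12 n34 n56 n32 n54 n16 n1a n3a n5a
  (hdet_neq0 _ _ _ d2) (hdet_neq0 _ _ _ d4) (hdet_neq0 _ _ _ d6)
  (E_lem Q1 L12) (E_lem Q3 L34) (E_lem Q5 L56)
  (E_lem Q3 L32) (E_lem Q5 L54) (E_lem Q1 L16)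
  (F_lem L12 L1a) (F_lem L32 L3a) (F_lem L34 L3a) (F_lem L54 L5a)
  (F_lem L56 L5a) (F_lem L16 L1a)).
exact: HH.
Qed.

Section Pat.
Variables (R : realType) (w : pt -> Chat R) (Cc : pt -> gcircle R).
Hypothesis Hp : hex_circle_pattern_MR w Cc.

Lemma wfv c : cls c = 0%Z -> gcircle_wf (Cc c).
Proof. by move=> h; case: (Hp _ h). Qed.

Lemma onv c k v : cls c = 0%Z -> (1 <= k <= 6)%N -> hexv c k = v ->
  on_gcircle (Cc c) (w v).
Proof. by move=> h hk <-; case: (Hp _ h) => _ H _ _ _; apply: H. Qed.

Lemma neqv c k l u v : cls c = 0%Z -> (1 <= k)%N -> (k < l)%N -> (l <= 6)%N ->
  hexv c k = u -> hexv c l = v -> w u <> w v.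
Proof. by move=> h h1 h2 h3 <- <-; case: (Hp _ h) => _ _ H _ _; apply: H. Qed.
End Pat.
Arguments wfv {R w Cc}. Arguments onv {R w Cc} Hp {c k v}. Arguments neqv {R w Cc} Hp {c k l u v}.

Ltac pteq := rewrite /hexv /padd /=; congr pair; lia.
Ltac clsq := rewrite /cls /hexv /padd /=; lia.

Theorem theorem5 (R : realType) (w : pt -> Chat R) (Cc : pt -> gcircle R)
    (Pinf : Chat R) :
  hex_circle_pattern_MR w Cc ->
  forall z : pt, cls z != 0%Z ->
    MR_minus1 (fun k => extend_w w Cc Pinf (hexv z k)).
Proof.
move=> Hp [x y] hz.
have [h1|h2] : cls (x,y) = 1%Z \/ cls (x,y) = 2%Z.
  move: hz; rewrite /cls; lia.
- have e1 : cls (hexv (x,y) 1) = 0%Z by move: h1; clsq.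
  have e3 : cls (hexv (x,y) 3) = 0%Z by move: h1; clsq.
  have e5 : cls (hexv (x,y) 5) = 0%Z by move: h1; clsq.
  have f2 : (cls (hexv (x,y) 2) == 0%Z) = false by move: h1; clsq.
  have f4 : (cls (hexv (x,y) 4) == 0%Z) = false by move: h1; clsq.
  have f6 : (cls (hexv (x,y) 6) == 0%Z) = false by move: h1; clsq.
  rewrite /MR_minus1; cbv beta; rewrite /extend_w e1 e3 e5 f2 f4 f6 eqxx.
  apply: (@core R _ _ _ _ (w (x,y))).
  - exact: wfv Hp _ e1.
  - exact: wfv Hp _ e3.
  - exact: wfv Hp _ e5.
  - by apply: (onv Hp (k := 4)) => //; pteq.
  - by apply: (onv Hp (k := 6)) => //; pteq.
  - by apply: (onv Hp (k := 2)) => //; pteq.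
  - by apply: (onv Hp (k := 3)) => //; pteq.
  - by apply: (onv Hp (k := 1)) => //; pteq.
  - by apply: (onv Hp (k := 5)) => //; pteq.
  - by apply: (onv Hp (k := 3)) => //; pteq.
  - by apply: (onv Hp (k := 1)) => //; pteq.
  - by apply: (onv Hp (k := 5)) => //; pteq.
  - by apply: (neqv Hp (c := hexv (x,y) 1) (k := 3) (l := 4)) => //; pteq.
  - by apply: (neqv Hp (c := hexv (x,y) 3) (k := 5) (l := 6)) => //; pteq.
  - by move=> E; apply: (neqv Hp (c := hexv (x,y) 1) (k := 4) (l := 5) _ _ _ _ _ _ (esym E)) => //; pteq.
- have e2 : cls (hexv (x,y) 2) = 0%Z by move: h2; clsq.
  have e4 : cls (hexv (x,y) 4) = 0%Z by move: h2; clsq.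
  have e6 : cls (hexv (x,y) 6) = 0%Z by move: h2; clsq.
  have f1 : (cls (hexv (x,y) 1) == 0%Z) = false by move: h2; clsq.
  have f3 : (cls (hexv (x,y) 3) == 0%Z) = false by move: h2; clsq.
  have f5 : (cls (hexv (x,y) 5) == 0%Z) = false by move: h2; clsq.
  rewrite /MR_minus1; cbv beta; rewrite /extend_w e2 e4 e6 f1 f3 f5 eqxx.
  have HH := @core R (Cc (hexv (x,y) 2)) (Cc (hexv (x,y) 4)) (Cc (hexv (x,y) 6)) Pinf (w (x,y))
     (w (hexv (x,y) 3)) (w (hexv (x,y) 5)) (w (hexv (x,y) 1)).
  apply: etrans (HH _ _ _ _ _ _ _ _ _ _ _ _ _ _ _); first ring.
  - exact: wfv Hp _ e2.
  - exact: wfv Hp _ e4.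
  - exact: wfv Hp _ e6.
  - by apply: (onv Hp (k := 5)) => //; pteq.
  - by apply: (onv Hp (k := 1)) => //; pteq.
  - by apply: (onv Hp (k := 3)) => //; pteq.
  - by apply: (onv Hp (k := 4)) => //; pteq.
  - by apply: (onv Hp (k := 2)) => //; pteq.
  - by apply: (onv Hp (k := 6)) => //; pteq.
  - by apply: (onv Hp (k := 4)) => //; pteq.
  - by apply: (onv Hp (k := 2)) => //; pteq.
  - by apply: (onv Hp (k := 6)) => //; pteq.
  - by apply: (neqv Hp (c := hexv (x,y) 2) (k := 4) (l := 5)) => //; pteq.
  - by move=> E; apply: (neqv Hp (c := hexv (x,y) 4) (k := 1) (l := 6) _ _ _ _ _ _ (esym E)) => //; pteq.
  - by move=> E; apply: (neqv Hp (c := hexv (x,y) 2) (k := 5) (l := 6) _ _ _ _ _ _ (esym E)) => //; pteq.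
Qed.
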